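(* Let $h\ge 4$ be an integer and let $\hat e(h,4)=4/3$ if $h\equiv 1\pmod 3$, $\hat e(h,4)=1$ if $h\equiv 0\pmod 3$, and $\hat e(h,4)=2/3$ if $h\equiv 2 \pmod 3$. Then there exists $W\in\mathcal W^2_{h\times 4}$ with $e(W)=\hat e(h,4)$, i.e. $|W|_\blacksquare = 8h/3+\hat e(h,4)$. Moreover, if $h>4$, such a $W$ can be chosen to be a snake.
   Context: A 2-dimensional binary word of dimensions $h\times w$ is an $h\times w$ matrix $W$ with entries in $\{\square,\blacksquare\}$; entries $\blacksquare$ are filled cells, entries $\square$ empty cells, and $|W|_\blacksquare$ is the number of filled cells. Two cells $(i,j),(i',j')$ are adjacent if $|i-i'|+|j-j'|=1$; the degree of a filled cell is the number of filled cells adjacent to it. $\mathcal W^2_{h\times w}$ is the set of $h\times w$ binary words in which every filled cell has degree at most $2$. The excess of an $a\times b$ word $U$ is $e(U)=|U|_\blacksquare-2ab/3$. A word $W$ is a snake if its set of filled cells is nonempty and the graph whose vertices are the filled cells, with edges between adjacent filled cells, is a path. *)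

(* Defs.v *)
From mathcomp Require Import all_boot all_order all_algebra.
Set Implicit Arguments. Unset Strict Implicit. Unset Printing Implicit Defensive.
Import Order.TTheory GRing.Theory Num.Theory.

Definition cell (h w : nat) := ('I_h * 'I_w)%type.

(* A 2-dimensional binary word: true = filled cell, false = empty cell. *)
Definition bword (h w : nat) := {ffun cell h w -> bool}.

Definition absdiff (n m : nat) : nat := (n - m) + (m - n).

Definition adj (h w : nat) (c c' : cell h w) : bool :=
  absdiff c.1 c'.1 + absdiff c.2 c'.2 == 1.

Definition filled (h w : nat) (W : bword h w) : {set cell h w} := [set c | W c].
Definition nfilled (h w : nat) (W : bword h w) : nat := #|filled W|.

Definition degree (h w : nat) (W : bword h w) (c : cell h w) : nat :=
  #|[set c' | W c' & adj c c']|.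

Definition in_W2 (h w : nat) (W : bword h w) : bool :=
  [forall c, W c ==> (degree W c <= 2)].

Definition excess (h w : nat) (W : bword h w) : rat :=
  ((nfilled W)%:R - (2 * h * w)%:R / 3%:R)%R.

(* The graph on filled cells (edges = adjacency) is a path graph:
   there is an enumeration s of the filled cells without repetition,
   nonempty, such that two filled cells are adjacent iff they are
   consecutive in s. *)
Definition is_snake (h w : nat) (W : bword h w) : Prop :=
  exists s : seq (cell h w),
    [/\ s != [::], uniq s, s =i filled W &
        forall (c0 : cell h w) (i j : nat), i < size s -> j < size s ->
          adj (nth c0 s i) (nth c0 s j) = ((i.+1 == j) || (j.+1 == i))].

Definition ehat4 (h : nat) : rat :=
  if h %% 3 == 1 then (4%:R / 3%:R)%R
  else if h %% 3 == 0 then 1%R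
  else (2%:R / 3%:R)%R.

(* Main.v *)
Require Import Defs.
From mathcomp Require Import all_boot all_order all_algebra.
From mathcomp Require Import zify.
Import Order.TTheory GRing.Theory Num.Theory.

Definition pt := (nat * nat)%type.
Definition nadj (p q : pt) : bool := absdiff p.1 q.1 + absdiff p.2 q.2 == 1.

Lemma nadjC p q : nadj p q = nadj q p.
Proof. rewrite /nadj /absdiff; apply/eqP/eqP; lia. Qed.

Definition ipath (s : seq pt) : Prop :=
  uniq s /\ forall i j, i < size s -> j < size s ->
    nadj (nth (0,0) s i) (nth (0,0) s j) = (i.+1 == j) || (j.+1 == i).

Definition ipathb (s : seq pt) : bool :=
  uniq s && all (fun i => all (fun j => nadj (nth (0,0) s i) (nth (0,0) s j)
       == ((i.+1 == j) || (j.+1 == i))) (iota 0 (size s))) (iota 0 (size s)).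

Lemma ipathbP s : ipathb s -> ipath s.
Proof.
case/andP=> u /allP H; split=> // i j ilt jlt.
have Hi : i \in iota 0 (size s) by rewrite mem_iota add0n ilt.
have Hj : j \in iota 0 (size s) by rewrite mem_iota add0n jlt.
by have /allP /(_ j Hj) /eqP := H i Hi.
Qed.

Definition shift (k : nat) (s : seq pt) : seq pt := map (fun p => (p.1 + k, p.2)) s.

Lemma nadj_shift k p q : nadj (p.1 + k, p.2) (q.1 + k, q.2) = nadj p q.
Proof. by rewrite /nadj /absdiff /= !subnDr. Qed.

Lemma ipath_shift k s : ipath s -> ipath (shift k s).
Proof.
case=> u H; split.
  rewrite map_inj_uniq // => [[a b] [c d]] /= [e ->]; congr (_,_); lia.
move=> i j; rewrite size_map => ilt jlt.
by rewrite !(nth_map (0,0)) // nadj_shift H.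
Qed.

Lemma ipath_cat s1 s2 :
  ipath s1 -> ipath s2 -> s1 != [::] -> s2 != [::] ->
  nadj (last (0,0) s1) (head (0,0) s2) ->
  (forall x y, x \in s1 -> y \in s2 ->
     (x != y) && (nadj x y ==> (x == last (0,0) s1) && (y == head (0,0) s2))) ->
  ipath (s1 ++ s2).
Proof.
move=> [u1 H1] [u2 H2] n1 n2 lh X.
have p1 : 0 < size s1 by rewrite lt0n size_eq0.
have p2 : 0 < size s2 by rewrite lt0n size_eq0.
split.
  rewrite cat_uniq u1 u2 /= andbT; apply/hasPn => y ys; apply/negP => xs.
  by have /andP[/eqP] := X y y xs ys.
have key : forall i j, i < size s1 -> size s1 <= j < size s1 + size s2 ->
   nadj (nth (0,0) s1 i) (nth (0,0) s2 (j - size s1)) = (i.+1 == j) || (j.+1 == i).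
  move=> i j ilt /andP[jge jlt].
  have jlt' : j - size s1 < size s2 by lia.
  case E: (nadj _ _).
    have /andP[_ /implyP /(_ E) /andP[ex ey]] := X _ _ (mem_nth (0,0) ilt) (mem_nth (0,0) jlt').
    move: ex; rewrite -nth_last nth_uniq //; last by rewrite ltn_predL.
    move: ey; rewrite -nth0 nth_uniq // => /eqP ey /eqP ex.
    have {}ex : i.+1 = size s1 by rewrite ex prednK.
    symmetry; lia.
  symmetry; apply/negbTE/negP => /orP[hij|hji]; last lia.
  have ei : i = (size s1).-1 by lia.
  have ej : j - size s1 = 0 by lia.
  by move: E; rewrite ei ej nth_last nth0 lh.
move=> i j; rewrite size_cat => ilt jlt; rewrite !nth_cat.
case: (ltnP i (size s1)) => hi; case: (ltnP j (size s1)) => hj.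
- exact: H1.
- by apply: key => //; rewrite hj.
- by rewrite nadjC (key j i hj) 1?orbC // hi.
- have b1 : i - size s1 < size s2 by lia.
  have b2 : j - size s1 < size s2 by lia.
  rewrite H2 //.
  have e1 : ((i - size s1).+1 == j - size s1) = (i.+1 == j) by apply/eqP/eqP; lia.
  have e2 : ((j - size s1).+1 == i - size s1) = (j.+1 == i) by apply/eqP/eqP; lia.
  by rewrite e1 e2.
Qed.

Lemma all2P (s1 s2 : seq pt) (P : pt -> pt -> bool) :
  all (fun x => all (P x) s2) s1 -> forall x z, x \in s1 -> z \in s2 -> P x z.
Proof. by move=> /allP H x z xs zs; have /allP := H x xs; apply. Qed.

Definition BL : seq pt := [:: (0,0); (0,1); (1,1); (2,1); (2,0); (3,0); (4,0); (5,0)].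
Definition BR : seq pt := [:: (5,3); (5,2); (4,2); (3,2); (3,3); (2,3); (1,3); (0,3)].

Definition goodcell (R : nat) (y : pt) : bool :=
  [&& y.1 < R, y.2 < 4 & (y.1 == 0) ==> [|| y.2 == 0, y.2 == 1 | y.2 == 3]].

Definition Inv (s : seq pt) (R : nat) : Prop :=
  [/\ ipath s, s != [::], head (0,0) s = (0,0), last (0,0) s = (0,3) & all (goodcell R) s].

Lemma mem_shift k s x : x \in shift k s -> exists2 y, y \in s & x = (y.1 + k, y.2).
Proof. by case/mapP=> y ys ->; exists y. Qed.

Lemma head_shift k s : s != [::] ->
  head (0,0) (shift k s) = ((head (0,0) s).1 + k, (head (0,0) s).2).
Proof. by case: s. Qed.

Lemma last_shift k s : s != [::] ->
  last (0,0) (shift k s) = ((last (0,0) s).1 + k, (last (0,0) s).2).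
Proof. by case: s => // a s _ /=; rewrite last_map. Qed.

Lemma shift_nil k s : s != [::] -> shift k s != [::].
Proof. by case: s. Qed.

Lemma Inv_step s R : Inv s R -> Inv (BL ++ (shift 6 s ++ BR)) (R + 6).
Proof.
case=> ps ne hs ls gs.
have lsh : last (0,0) (shift 6 s) = (6,3) by rewrite last_shift // ls.
have hsh : head (0,0) (shift 6 s) = (6,0) by rewrite head_shift // hs.
have nsh := @shift_nil 6 s ne.
have p2 : ipath (shift 6 s ++ BR).
  apply: ipath_cat => //; [exact: ipath_shift | exact: ipathbP | by rewrite lsh |].
  move=> x z /mem_shift [y ys ->] zin.
  have := allP gs y ys; move: zin; rewrite lsh /BR !inE /goodcell /nadj /absdiff.
  case: y {ys} => a b; case: z => c d /=; rewrite !xpair_eqE; lia.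
have hc : head (0,0) (shift 6 s ++ BR) = (6,0).
  by move: hsh; case: (shift 6 s) nsh.
split.
- apply: ipath_cat => //; [exact: ipathbP | by case: (shift 6 s) nsh | by rewrite hc |].
  move=> x z xin; rewrite mem_cat => /orP[/mem_shift [y ys ->]|zin].
    have := allP gs y ys; move: xin; rewrite hc /BL !inE /goodcell /nadj /absdiff.
    case: y {ys} => a b; case: x => c d /=; rewrite !xpair_eqE; lia.
  rewrite hc; move: x z xin zin; exact: all2P.
- by [].
- by [].
- by rewrite !last_cat.
- rewrite !all_cat; apply/andP; split; last apply/andP; last split.
  + apply/allP => x; rewrite /BL !inE; case: x => a b; rewrite !xpair_eqE /goodcell /=; lia.
  + apply/allP => x /mem_shift [y ys ->]; have := allP gs y ys; rewrite /goodcell.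
    case: y {ys} => a b /=; lia.
  + apply/allP => x; rewrite /BR !inE; case: x => a b; rewrite !xpair_eqE /goodcell /=; lia.
Qed.

Fixpoint Uc (B : seq pt) (m : nat) : seq pt :=
  if m is m'.+1 then BL ++ (shift 6 (Uc B m') ++ BR) else B.

Lemma Uc_Inv B R m : Inv B R -> Inv (Uc B m) (R + 6 * m).
Proof.
move=> IB; elim: m => [|m IH] /=; first by rewrite muln0 addn0.
have -> : R + 6 * m.+1 = R + 6 * m + 6 by lia.
exact: Inv_step.
Qed.

Lemma size_Uc B m : size (Uc B m) = size B + 16 * m.
Proof. elim: m => [|m IH] /=; first by rewrite muln0 addn0. rewrite !size_cat size_map IH /=; lia. Qed.

Lemma top_ok tl tr T U R :
  Inv U R -> ipathb tl -> ipathb tr -> tl != [::] -> tr != [::] ->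
  last (0,0) tl = (T, 0) -> head (0,0) tr = (T, 3) ->
  all (fun x => (x.1 <= T) && ((x.1 == T) ==> ((x.2 == 0) || (x.2 == 2)))) tl ->
  all (fun x => (x.1 <= T) && ((x.1 == T) ==> ((x.2 == 3) || (x.2 == 2)))) tr ->
  all (fun x => all (fun z => (x != z) && ~~ nadj x z) tr) tl ->
  ipath (tl ++ (shift T.+1 U ++ tr)).
Proof.
case=> ps ne hs ls gs ptl ptr ntl ntr ltl htr atl atr alr.
have lsh : last (0,0) (shift T.+1 U) = (T.+1,3) by rewrite last_shift // ls.
have hsh : head (0,0) (shift T.+1 U) = (T.+1,0) by rewrite head_shift // hs.
have nsh := @shift_nil T.+1 U ne.
have p2 : ipath (shift T.+1 U ++ tr).
  apply: ipath_cat => //; [exact: ipath_shift | exact: ipathbP | |].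
    by rewrite lsh htr /nadj /absdiff /=; apply/eqP; lia.
  move=> x z /mem_shift [y ys ->] zin.
  have := allP gs y ys; have := allP atr z zin; rewrite lsh htr /goodcell /nadj /absdiff.
  case: y {ys} => a b; case: z {zin} => c d /=; rewrite !xpair_eqE; lia.
have hc : head (0,0) (shift T.+1 U ++ tr) = (T.+1,0).
  by move: hsh; case: (shift T.+1 U) nsh.
apply: ipath_cat => //; [exact: ipathbP | by case: (shift T.+1 U) nsh | |].
  by rewrite hc ltl /nadj /absdiff /=; apply/eqP; lia.
move=> x z xin; rewrite mem_cat => /orP[/mem_shift [y ys ->]|zin].
  have := allP gs y ys; have := allP atl x xin; rewrite hc ltl /goodcell /nadj /absdiff.
  case: y {ys} => a b; case: x {xin} => c d /=; rewrite !xpair_eqE; lia.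
have /andP[-> /negbTE ->] := @all2P _ _ _ alr x z xin zin.
by [].
Qed.

Lemma ipath_deg s x : ipath s -> x \in s -> count (nadj x) s <= 2.
Proof.
case=> u H xs.
set i := index x s.
have ilt : i < size s by rewrite index_mem.
have ex : nth (0,0) s i = x by rewrite nth_index.
rewrite -size_filter.
apply: (leq_trans (uniq_leq_size (s2 := [:: nth (0,0) s i.-1; nth (0,0) s i.+1]) (filter_uniq _ u) _)) => //.
move=> y; rewrite mem_filter => /andP[ad ys].
have jlt : index y s < size s by rewrite index_mem.
have ey : nth (0,0) s (index y s) = y by rewrite nth_index.
move: ad; rewrite -ex -{1}ey H // => /orP[/eqP e|/eqP e].
  by rewrite !inE -ey -e eqxx orbT.
by rewrite !inE -ey -e /= eqxx.
Qed.

Definition valp h (c : cell h 4) : pt := (val c.1, val c.2).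
Arguments valp {h}.

Lemma valp_inj h : injective (@valp h).
Proof. by move=> [a b] [c d] [/val_inj -> /val_inj ->]. Qed.

Lemma lift_seq h (s : seq pt) : all (fun p => (p.1 < h) && (p.2 < 4)) s ->
  exists s' : seq (cell h 4), map (@valp h) s' = s.
Proof.
elim: s => [|p s IH] /=; first by exists [::].
case/andP => /andP[p1 p2] /IH [s' e].
by exists ((Ordinal p1, Ordinal p2) :: s'); rewrite /= e /valp /= -surjective_pairing.
Qed.

Lemma degreeE h (s' : seq (cell h 4)) c : uniq s' ->
  degree [ffun c => c \in s'] c = count (nadj (valp c)) (map (@valp h) s').
Proof.
move=> u; rewrite /degree count_map -size_filter.
rewrite -(card_uniqP (filter_uniq (preim (@valp h) (nadj (valp c))) u)).
by apply: eq_card => x; rewrite inE ffunE mem_filter andbC.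
Qed.

Lemma realize_gen h (s : seq pt) : uniq s -> all (fun p => (p.1 < h) && (p.2 < 4)) s ->
  (forall x, x \in s -> count (nadj x) s <= 2) ->
  exists W : bword h 4, [/\ in_W2 W, nfilled W = size s &
     (ipath s -> s != [::] -> is_snake W)].
Proof.
move=> u bs deg; have [s' e] := @lift_seq h s bs.
have u' : uniq s' by rewrite -(map_inj_uniq (@valp_inj h)) e.
exists [ffun c => c \in s']; split.
- apply/forallP => c; apply/implyP; rewrite ffunE => cin.
  rewrite degreeE // e; apply: deg; by rewrite -e map_f.
- rewrite /nfilled -e size_map -(card_uniqP u').
  by apply: eq_card => x; rewrite /filled inE ffunE.
- case=> _ H ne; exists s'; split => //.
  + by move: ne; rewrite -e; case: (s').
  + by move=> x; rewrite /filled inE ffunE.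
  + move=> c0 i j ilt jlt.
    have -> : adj (nth c0 s' i) (nth c0 s' j) =
       nadj (valp (nth c0 s' i)) (valp (nth c0 s' j)) by [].
    rewrite -!(nth_map c0 (0,0)) // e H //; by rewrite -e size_map.
Qed.

Lemma realize h (s : seq pt) : ipath s -> s != [::] ->
  all (fun p => (p.1 < h) && (p.2 < 4)) s ->
  exists W : bword h 4, [/\ in_W2 W, nfilled W = size s & is_snake W].
Proof.
move=> ps ne bs.
have [W [w1 w2 w3]] := @realize_gen h s (proj1 ps) bs (fun x xs => @ipath_deg s x ps xs).
by exists W; split => //; apply: w3.
Qed.

Lemma full_ok tl tr T U R :
  Inv U R -> ipathb tl -> ipathb tr -> tl != [::] -> tr != [::] ->
  last (0,0) tl = (T, 0) -> head (0,0) tr = (T, 3) ->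
  all (fun x => (x.1 <= T) && ((x.1 == T) ==> ((x.2 == 0) || (x.2 == 2)))) tl ->
  all (fun x => (x.1 <= T) && ((x.1 == T) ==> ((x.2 == 3) || (x.2 == 2)))) tr ->
  all (fun x => all (fun z => (x != z) && ~~ nadj x z) tr) tl ->
  all (fun x => (x.1 <= T) && (x.2 < 4)) (tl ++ tr) ->
  [/\ ipath (tl ++ (shift T.+1 U ++ tr)), tl ++ (shift T.+1 U ++ tr) != [::],
      all (fun p => (p.1 < T.+1 + R) && (p.2 < 4)) (tl ++ (shift T.+1 U ++ tr)) &
      size (tl ++ (shift T.+1 U ++ tr)) = size tl + size U + size tr].
Proof.
move=> IU ptl ptr ntl ntr ltl htr atl atr alr bnd.
split.
- exact: top_ok IU ptl ptr ntl ntr ltl htr atl atr alr.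
- by case: (tl) ntl.
- move: bnd; rewrite !all_cat => /andP[b1 b2]; case: IU => _ _ _ _ gs.
  apply/and3P; split.
  + apply/allP => x /(allP b1); lia.
  + apply/allP => x /mem_shift [y ys ->]; have := allP gs y ys; rewrite /goodcell.
    case: y {ys} => a b /=; lia.
  + apply/allP => x /(allP b2); lia.
- by rewrite !size_cat size_map addnA.
Qed.

Lemma exc n h e : 3 * n = 8 * h + e ->
  ((n%:R : rat) - (2 * h * 4)%:R / 3%:R = e%:R / 3%:R)%R.
Proof.
move=> H; apply: (@GRing.mulIf _ 3%:R) => //.
rewrite mulrBl !divfK // -natrM.
have -> : (n * 3 = 2 * h * 4 + e)%N by lia.
by rewrite natrD addrAC subrr add0r.
Qed.

Lemma finish h (s : seq pt) (e : nat) : ipath s -> s != [::] ->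
  all (fun p => (p.1 < h) && (p.2 < 4)) s -> 3 * size s = 8 * h + e ->
  ehat4 h = (e%:R / 3%:R)%R ->
  exists W : bword h 4, [/\ in_W2 W, excess W = ehat4 h & is_snake W].
Proof.
move=> ps ne bs sz eh; have [W [w1 w2 w3]] := @realize h s ps ne bs.
by exists W; split => //; rewrite /excess w2 eh; apply: exc.
Qed.

Definition bot2 : seq pt := [:: (0,0); (0,1); (1,1); (1,2); (1,3); (0,3)].
Definition bot5 : seq pt := [:: (0,0); (0,1); (1,1); (2,1); (2,0); (3,0); (4,0); (4,1);
   (4,2); (3,2); (3,3); (2,3); (1,3); (0,3)].
Definition tl1 : seq pt := [:: (0,0)].
Definition tr1 : seq pt := [:: (0,3); (0,2)].
Definition tl5 : seq pt := [:: (1,0); (0,0); (0,1); (0,2); (0,3); (1,3); (2,3); (2,2); (2,1);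
   (3,1); (3,0); (4,0)].
Definition tr5 : seq pt := [:: (4,3); (4,2)].
Definition s12 : seq pt := [:: (0,0); (1,0); (2,0); (2,1); (3,1); (3,2); (3,3); (2,3);
   (1,3); (0,3); (0,2); (0,1)].

Lemma I2 : Inv bot2 2.
Proof. by split => //; apply: ipathbP. Qed.
Lemma I5 : Inv bot5 5.
Proof. by split => //; apply: ipathbP. Qed.

Lemma inv_bnd U R : Inv U R -> all (fun p => (p.1 < R) && (p.2 < 4)) U.
Proof.
case=> _ _ _ _ /allP gs; apply/allP => x /gs; rewrite /goodcell; case/and3P => -> -> //.
Qed.

Lemma ehat_mod h k : h %% 3 = k -> ehat4 h =
  ((if k == 1 then 4 else if k == 0 then 3 else 2)%:R / 3%:R)%R.
Proof.
rewrite /ehat4 => ->; case: ifP => // _; case: ifP => // _.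
all: try by rewrite divff.
Qed.

Local Open Scope ring_scope.

Theorem lemma4 (h : nat) (hh : (4 <= h)%N) :
  (exists W : bword h 4, in_W2 W /\ excess W = ehat4 h) /\
  ((4 < h)%N -> exists W : bword h 4, [/\ in_W2 W, excess W = ehat4 h & is_snake W]).
Proof.
have main : (4 < h)%N -> exists W : bword h 4, [/\ in_W2 W, excess W = ehat4 h & is_snake W].
  move=> h4.
  have r6 : (h %% 6 < 6)%N by rewrite ltn_pmod.
  case E: (h %% 6)%N r6 => [|[|[|[|[|[|r]]]]]] // _.
  -
    have [m hm] : exists m, h = (1 + (5 + 6 * m))%N by exists ((h %/ 6).-1)%N; lia.
    have [p1 p2 p3 p4] := @full_ok tl1 tr1 0 (Uc bot5 m) (5 + 6 * m)%N (@Uc_Inv _ _ m I5)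
      isT isT isT isT erefl erefl isT isT isT isT.
    apply: (@finish h _ 3%N p1) => //; first by rewrite hm.
      by rewrite p4 size_Uc /=; lia.
    by apply: (@ehat_mod h 0%N); lia.
  -
    have [m hm] : exists m, h = (5 + (2 + 6 * m))%N by exists ((h %/ 6).-1)%N; lia.
    have [p1 p2 p3 p4] := @full_ok tl5 tr5 4 (Uc bot2 m) (2 + 6 * m)%N (@Uc_Inv _ _ m I2)
      isT isT isT isT erefl erefl isT isT isT isT.
    apply: (@finish h _ 4%N p1) => //; first by rewrite hm.
      by rewrite p4 size_Uc /=; lia.
    by apply: (@ehat_mod h 1%N); lia.
  -
    have [m hm] : exists m, h = (2 + 6 * m)%N by exists (h %/ 6)%N; lia.
    have [p1 p2 _ _ p5] := @Uc_Inv _ _ m I2.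
    apply: (@finish h _ 2%N p1) => //; first by rewrite hm; apply: inv_bnd (@Uc_Inv _ _ m I2).
      by rewrite size_Uc /=; lia.
    by apply: (@ehat_mod h 2%N); lia.
  -
    have [m hm] : exists m, h = (1 + (2 + 6 * m))%N by exists (h %/ 6)%N; lia.
    have [p1 p2 p3 p4] := @full_ok tl1 tr1 0 (Uc bot2 m) (2 + 6 * m)%N (@Uc_Inv _ _ m I2)
      isT isT isT isT erefl erefl isT isT isT isT.
    apply: (@finish h _ 3%N p1) => //; first by rewrite hm.
      by rewrite p4 size_Uc /=; lia.
    by apply: (@ehat_mod h 0%N); lia.
  -
    have [m hm] : exists m, h = (5 + (5 + 6 * m))%N by exists ((h %/ 6).-1)%N; lia.
    have [p1 p2 p3 p4] := @full_ok tl5 tr5 4 (Uc bot5 m) (5 + 6 * m)%N (@Uc_Inv _ _ m I5)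
      isT isT isT isT erefl erefl isT isT isT isT.
    apply: (@finish h _ 4%N p1) => //; first by rewrite hm.
      by rewrite p4 size_Uc /=; lia.
    by apply: (@ehat_mod h 1%N); lia.
  -
    have [m hm] : exists m, h = (5 + 6 * m)%N by exists (h %/ 6)%N; lia.
    have [p1 p2 _ _ p5] := @Uc_Inv _ _ m I5.
    apply: (@finish h _ 2%N p1) => //; first by rewrite hm; apply: inv_bnd (@Uc_Inv _ _ m I5).
      by rewrite size_Uc /=; lia.
    by apply: (@ehat_mod h 2%N); lia.
split; last exact: main.
case: (ltnP 4 h) => [/main [W [w1 w2 _]]|h4]; first by exists W.
have e4 : h = 4%N by lia.
subst h.
have [W [w1 w2 _]] := @realize_gen 4 s12 isT isT (fun x xs => allP (isT : all (fun x => count (nadj x) s12 <= 2)%N s12) x xs).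
exists W; split => //.
rewrite /excess w2.
have -> : ehat4 4 = (4%:R / 3%:R)%R by [].
by apply: exc.
Qed.
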